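(* For every $n\ge 3$, the local metric dimension of the convex polytope graph $S_n$ satisfies $lmd(S_n)=2$ if $n$ is odd and $lmd(S_n)=3$ if $n$ is even.
   Context: For $n\ge 3$, $S_n$ is the graph with vertex set $\{a_i,b_i,c_i,d_i : 1\le i\le n\}$ and edge set $\{a_ia_{i+1}, b_ib_{i+1}, c_ic_{i+1}, d_id_{i+1}, a_{i+1}b_i, a_ib_i, b_ic_i, c_id_i : 1\le i\le n\}$, indices taken modulo $n$. $d(u,v)$ is the graph distance. A vertex $w$ resolves $u,v$ if $d(u,w)\neq d(v,w)$. A set $W$ of vertices is a local resolving set if every two adjacent vertices are resolved by some element of $W$; $lmd(G)$ is the minimum cardinality of a local resolving set of $G$. *)

(* Defs.v *)
From mathcomp Require Import all_boot.
Set Implicit Arguments. Unset Strict Implicit. Unset Printing Implicit Defensive.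

Section Graphs.
Variable T : finType.
Variable adj : rel T.

Definition walk_of_length (k : nat) (u v : T) : bool :=
  [exists p : k.-tuple T, path adj u p && (last u p == v)].

(* A shortest walk has at most #|T| - 1 edges, so searching k < #|T| suffices;
   (for disconnected pairs the value would be #|T|, irrelevant here: S_n is connected). *)
Definition gdist (u v : T) : nat :=
  find (fun k => walk_of_length k u v) (iota 0 #|T|).

Definition resolves (w u v : T) : bool := gdist u w != gdist v w.

Definition local_resolving (W : {set T}) : bool :=
  [forall u, forall v, adj u v ==> [exists w in W, resolves w u v]].

(* local metric dimension: minimum cardinality of a local resolving set
   (the whole vertex set is always one, so #|T| is a valid default) *)
Definition lmd : nat :=
  \big[minn/#|T|]_(W : {set T} | local_resolving W) #|W|.
End Graphs.

(* Vertex (l, i) with l : 'I_4 encodes a_i (l=0), b_i (l=1), c_i (l=2), d_i (l=3);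
   indices i : 'I_n, successor taken modulo n via ordS. *)
Definition Sn_vertex (n : nat) := ('I_4 * 'I_n)%type.

Definition Sn_arc (n : nat) (x y : Sn_vertex n) : bool :=
  let: (l, i) := x in let: (m, j) := y in
  [|| (l == m) && (j == ordS i)
    , [&& val l == 0, val m == 1 & i == ordS j]            (* a_{i+1} b_i *)
    , [&& val l == 0, val m == 1 & i == j]
    , [&& val l == 1, val m == 2 & i == j]
    | [&& val l == 2, val m == 3 & i == j] ].

Definition Sn_adj (n : nat) : rel (Sn_vertex n) :=
  fun x y => Sn_arc x y || Sn_arc y x.

(* Main.v *)
Require Import Defs.
From mathcomp Require Import all_boot.
From mathcomp Require Import zify.
Set Implicit Arguments. Unset Strict Implicit. Unset Printing Implicit Defensive.

Section Gen.
Variable T : finType.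
Variable adj : rel T.

Lemma find_iota_eq (P : pred nat) m N : m < N -> P m -> (forall k, k < m -> ~~ P k) ->
  find P (iota 0 N) = m.
Proof.
move=> hmN hP hk.
have -> : N = m + (N - m) by lia.
rewrite iotaD find_cat.
have -> : has P (iota 0 m) = false.
  apply/negbTE/hasPn => k; rewrite mem_iota add0n => /andP [_ hk']; exact: hk.
rewrite size_iota add0n.
have -> : N - m = (N - m - 1).+1 by lia.
by rewrite /= hP addn0.
Qed.

Lemma gdist_char (w : T) (f : T -> nat) :
  f w = 0 ->
  (forall x, f x = 0 -> x = w) ->
  (forall x y, adj x y -> f x <= (f y).+1) ->
  (forall x, 0 < f x -> exists y, adj x y /\ (f y).+1 = f x) ->
  (forall x, f x < #|T|) ->
  forall x, gdist adj x w = f x.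
Proof.
move=> hw h0 hlip hdesc hbd x.
rewrite /gdist; apply: find_iota_eq => //.
- have: forall k x, f x = k -> walk_of_length adj k x w.
    elim=> [|k IH] x0 hx0.
      rewrite (h0 _ hx0); apply/existsP; exists [tuple]; by rewrite /=.
    have hpos : 0 < f x0 by rewrite hx0.
    have [y [hxy hy]] := hdesc x0 hpos.
    have hyk : f y = k by move: hy; rewrite hx0 => -[].
    have /existsP [p /andP [hp hl]] := IH y hyk.
    apply/existsP; exists [tuple of y :: p]; by rewrite /= hxy hp.
  by move/(_ (f x) x erefl).
- move=> k hk; apply/negP => /existsP [p /andP [hp /eqP hl]].
  have key : forall (s : seq T) x0, path adj x0 s -> f x0 <= size s + f (last x0 s).
    elim=> [|y s IH] x0 /=; first by rewrite add0n.
    move=> /andP [h1 h2]; have := hlip _ _ h1; have := IH _ h2; lia.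
  have := key _ _ hp; rewrite hl size_tuple hw; lia.
Qed.
End Gen.

Definition absd (a b : nat) := (a - b) + (b - a).
Definition cyc (m a b : nat) := minn (absd a b) (m - absd a b).
Definition half (c : nat) := c.+1./2.
Definition near (m k p p' : nat) := p' = p + k \/ p' + m = p + k \/ p = p' + k \/ p + m = p' + k.

Lemma cycP m p q : p < m -> q < m ->
  [\/ p <= q /\ 2*(q-p) <= m /\ cyc m p q = q - p,
      p <= q /\ m <= 2*(q-p) /\ cyc m p q = m - (q - p),
      q <= p /\ 2*(p-q) <= m /\ cyc m p q = p - q |
      q <= p /\ m <= 2*(p-q) /\ cyc m p q = m - (p - q)].
Proof.
rewrite /cyc /absd => hp hq.
case: (leqP p q) => h1.
  have -> : p - q = 0 by lia.
  case: (leqP (2*(q-p)) m) => h2.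
    by constructor 1; rewrite add0n; split=> //; split=> //; lia.
  by constructor 2; rewrite add0n; split=> //; split; lia.
have -> : q - p = 0 by lia.
case: (leqP (2*(p-q)) m) => h2.
  by constructor 3; rewrite addn0; split; [lia|split=> //; lia].
by constructor 4; rewrite addn0; split; [lia|split; lia].
Qed.

Lemma cyc_near m k p p' q : p < m -> p' < m -> q < m -> near m k p p' ->
  cyc m p q <= cyc m p' q + k.
Proof. move=> hp hp' hq; rewrite /near; case: (cycP hp hq); case: (cycP hp' hq); lia. Qed.

Lemma half_lip c c' k : k <= 2 -> c <= c' + k -> half c <= (half c').+1.
Proof. rewrite /half => *; lia. Qed.

Lemma cyc_desc m k p q : p < m -> q < m -> 0 < k -> k <= cyc m p q ->
  exists p', [/\ p' < m, near m k p p' & cyc m p' q + k = cyc m p q].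
Proof.
move=> hp hq hk hc.
have Hm : forall p', p' < m -> near m k p p' -> 
   (cyc m p' q + k = cyc m p q) -> exists p', [/\ p' < m, near m k p p' & cyc m p' q + k = cyc m p q].
  by move=> p' *; exists p'.
rewrite /near in Hm.
case: (cycP hp hq) => -[h1 [h2 e]]; rewrite e in hc.
- apply: (Hm (p + k)); try lia. have hp': p + k < m by lia.
  case: (cycP hp' hq); lia.
- case: (leqP k p) => h3.
    apply: (Hm (p - k)); try lia. have hp': p - k < m by lia. case: (cycP hp' hq); lia.
  apply: (Hm (p + m - k)); try lia. have hp': p + m - k < m by lia. case: (cycP hp' hq); lia.
- apply: (Hm (p - k)); try lia. have hp': p - k < m by lia.
  case: (cycP hp' hq); lia.
- case: (ltnP (p + k) m) => h3.
    apply: (Hm (p + k)); try lia. case: (cycP h3 hq); lia.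
  apply: (Hm (p + k - m)); try lia. have hp': p + k - m < m by lia. case: (cycP hp' hq); lia.
Qed.

Lemma cyc_par m p q : m %% 2 = 0 -> p < m -> q < m -> cyc m p q %% 2 = (p + q) %% 2.
Proof. move=> hm hp hq; case: (cycP hp hq); lia. Qed.

Lemma cycQ m p q : p < m -> q < m ->
  (p <= q /\ 2*(q-p) <= m /\ cyc m p q = q - p) \/
  (p <= q /\ m <= 2*(q-p) /\ cyc m p q = m - (q - p)) \/
  (q <= p /\ 2*(p-q) <= m /\ cyc m p q = p - q) \/
  (q <= p /\ m <= 2*(p-q) /\ cyc m p q = m - (p - q)).
Proof. by move=> hp hq; case: (cycP hp hq); tauto. Qed.

Lemma cycR m p q : p < m -> q < m ->
  2 * cyc m p q <= m /\ (q = p + cyc m p q \/ q + m = p + cyc m p q \/ p = q + cyc m p q \/ p + m = q + cyc m p q).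
Proof. move=> hp hq; case: (cycP hp hq); lia. Qed.

Lemma halfR c : c = 2 * half c \/ c + 1 = 2 * half c.
Proof. rewrite /half; lia. Qed.

Lemma cycS n p q : p < 2 * n -> q < 2 * n -> let c := cyc (2 * n) p q in
  (q <= p /\ p <= q + n /\ c + q = p) \/ (p <= q /\ q <= p + n /\ c + p = q) \/
  (p + n <= q /\ c + q = p + 2 * n) \/ (q + n <= p /\ c + p = q + 2 * n).
Proof. move=> hp hq /=; case: (cycP hp hq); lia. Qed.

Lemma ordS_val n (i : 'I_n) : (i.+1 < n /\ nat_of_ord (ordS i) = i.+1) \/ (i.+1 = n /\ nat_of_ord (ordS i) = 0).
Proof.
rewrite /= /ordS /=. case: (ltnP i.+1 n) => h.
  by left; rewrite modn_small.
have e : i.+1 = n by apply/eqP; rewrite eqn_leq h ltn_ord.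
by right; rewrite e modnn.
Qed.

Lemma ord_pred_val n (i : 'I_n) : (0 < i /\ nat_of_ord (ord_pred i) = i.-1) \/ (i = 0 :> nat /\ nat_of_ord (ord_pred i) = n.-1).
Proof.
rewrite /ord_pred /=. case: (posnP i) => h.
  right; split => //; rewrite h add0n modn_small //; have := ltn_ord i; lia.
left; split => //. have hi := ltn_ord i.
have -> : (i + n).-1 = n + i.-1 by lia.
rewrite modnDl modn_small; lia.
Qed.

Section S.
Variable n : nat.
Hypothesis hn : 3 <= n.
Local Notation V := (Sn_vertex n).

Definition hv (v : V) : nat := v.1 - 1.
Definition pv (v : V) : nat := 2 * v.2 + minn v.1 1.
Definition F (v w : V) : nat := absd (hv v) (hv w) + half (cyc (2 * n) (pv v) (pv w)).

Lemma pv_lt v : pv v < 2 * n.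
Proof. rewrite /pv; have := ltn_ord v.2; lia. Qed.
Lemma hv_le v : hv v <= 2.
Proof. rewrite /hv; have := ltn_ord v.1; lia. Qed.
Lemma hv_pos v : 0 < hv v -> pv v %% 2 = 1.
Proof. rewrite /hv /pv => h; lia. Qed.

Lemma adj_class x y : Sn_adj x y ->
  (pv x = pv y /\ (hv y = hv x + 1 \/ hv x = hv y + 1)) \/
  (hv x = hv y /\ (near (2 * n) 1 (pv x) (pv y) \/ near (2 * n) 2 (pv x) (pv y))).
Proof.
case: x => l i; case: y => m j.
rewrite /Sn_adj /Sn_arc /hv /pv /near /=.
have hl := ltn_ord l; have hm := ltn_ord m; have hi := ltn_ord i; have hj := ltn_ord j.
have hSi := ordS_val i; have hSj := ordS_val j.
case/orP => /or4P [/andP[/eqP e1 /eqP e2] | /and3P[/eqP e1 /eqP e2 /eqP e3]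
     | /and3P[/eqP e1 /eqP e2 /eqP e3] | /orP [/and3P[/eqP e1 /eqP e2 /eqP e3]|/and3P[/eqP e1 /eqP e2 /eqP e3]]];
  subst; try lia.
Qed.

Lemma F_lip x y w : Sn_adj x y -> F x w <= (F y w).+1.
Proof.
move/adj_class; rewrite /F.
have hx := pv_lt x; have hy := pv_lt y; have hw := pv_lt w.
case=> [[e [h|h]] | [e [h|h]]].
- rewrite e; rewrite /absd; lia.
- rewrite e; rewrite /absd; lia.
- rewrite e; have := half_lip (isT : 1 <= 2) (cyc_near hx hy hw h); lia.
- rewrite e; have := half_lip (leqnn 2) (cyc_near hx hy hw h); lia.
Qed.

Lemma cyc0 m p q : p < m -> q < m -> cyc m p q = 0 -> p = q.
Proof. move=> hp hq; case: (cycP hp hq); lia. Qed.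

Lemma F_zero x w : F x w = 0 -> x = w.
Proof.
rewrite /F => h.
have h1 : hv x = hv w by move: h; rewrite /absd; lia.
have h2 : cyc (2 * n) (pv x) (pv w) = 0 by move: h; rewrite /half; lia.
have := cyc0 (pv_lt x) (pv_lt w) h2.
case: x w h1 {h h2} => [l i] [lw iw]; rewrite /hv /pv /= => h1 h2.
have hl := ltn_ord l; have hlw := ltn_ord lw.
have e1 : l = lw by apply: val_inj => /=; lia.
have e2 : i = iw by apply: val_inj => /=; lia.
by rewrite e1 e2.
Qed.

Lemma F_bound x w : F x w < #|{: V}|.
Proof.
rewrite card_prod !card_ord /F.
have := hv_le x; have := hv_le w.
have hc : cyc (2 * n) (pv x) (pv w) <= n.
  case: (cycP (pv_lt x) (pv_lt w)); lia.
rewrite /half /absd; lia.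
Qed.

Lemma adj_sym (x y : V) : Sn_adj x y = Sn_adj y x.
Proof. by rewrite /Sn_adj orbC. Qed.

Notation lvA := (@Ordinal 4 0 isT).
Notation lvB := (@Ordinal 4 1 isT).
Notation lvC := (@Ordinal 4 2 isT).
Notation lvD := (@Ordinal 4 3 isT).

Lemma adj_same (l : 'I_4) (i : 'I_n) : Sn_adj (l, i) (l, ordS i).
Proof. by rewrite /Sn_adj /Sn_arc !eqxx. Qed.
Lemma adj_ab (i : 'I_n) : Sn_adj (lvA, i) (lvB, i).
Proof. by rewrite /Sn_adj /Sn_arc /= !eqxx /= ?orbT. Qed.
Lemma adj_baS (i : 'I_n) : Sn_adj (lvB, i) (lvA, ordS i).
Proof. by rewrite /Sn_adj /Sn_arc /= !eqxx /= ?orbT. Qed.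
Lemma adj_bc (i : 'I_n) : Sn_adj (lvB, i) (lvC, i).
Proof. by rewrite /Sn_adj /Sn_arc /= !eqxx /= ?orbT. Qed.
Lemma adj_cd (i : 'I_n) : Sn_adj (lvC, i) (lvD, i).
Proof. by rewrite /Sn_adj /Sn_arc /= !eqxx /= ?orbT. Qed.

Lemma R2 x p' : p' < 2 * n -> near (2 * n) 2 (pv x) p' ->
  exists y, [/\ Sn_adj x y, hv y = hv x & pv y = p'].
Proof.
case: x => l i; rewrite /near /pv /hv /= => hp' hnear.
have hi := ltn_ord i; have hS := ordS_val i; have hP := ord_pred_val i.
have [fw|bw] : (p' = 2 * i + minn l 1 + 2 \/ p' + 2 * n = 2 * i + minn l 1 + 2) \/
               (2 * i + minn l 1 = p' + 2 \/ 2 * i + minn l 1 + 2 * n = p' + 2) by lia.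
- exists (l, ordS i); split => //; [exact: adj_same | change (2 * ordS i + minn l 1 = p'); lia].
- exists (l, ord_pred i); split => //; last by change (2 * ord_pred i + minn l 1 = p'); lia.
  by rewrite adj_sym -{2}(ord_predK i) adj_same.
Qed.

Lemma R1 x p' : hv x = 0 -> p' < 2 * n -> near (2 * n) 1 (pv x) p' ->
  exists y, [/\ Sn_adj x y, hv y = 0 & pv y = p'].
Proof.
case: x => [[[|[|l]] hl] i]; rewrite /near /pv /hv /= => h0 hp' hnear; last by lia.
- have hi := ltn_ord i; have hS := ordS_val i; have hP := ord_pred_val i.
  have e : Ordinal hl = lvA by apply: val_inj.
  rewrite e.
  have [fw|bw] : (p' = 2 * i + 1) \/ (2 * i = p' + 1 \/ 2 * i + 2 * n = p' + 1) by lia.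
  + exists (lvB, i); split; [exact: adj_ab | by [] | change (2 * i + 1 = p'); lia].
  + exists (lvB, ord_pred i); split; [|by []| change (2 * ord_pred i + 1 = p'); lia].
    by rewrite adj_sym -{2}(ord_predK i) adj_baS.
- have hi := ltn_ord i; have hS := ordS_val i; have hP := ord_pred_val i.
  have e : Ordinal hl = lvB by apply: val_inj.
  rewrite e.
  have [fw|bw] : (p' = 2 * i + 1 + 1 \/ p' + 2 * n = 2 * i + 1 + 1) \/ (2 * i + 1 = p' + 1) by lia.
  + exists (lvA, ordS i); split; [exact: adj_baS | by [] | change (2 * ordS i + 0 = p'); lia].
  + exists (lvA, i); split; [by rewrite adj_sym adj_ab | by [] | change (2 * i + 0 = p'); lia].
Qed.

Lemma Rdown x : 0 < hv x -> exists y, [/\ Sn_adj x y, hv y + 1 = hv x & pv y = pv x].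
Proof.
case: x => [[[|[|[|[|l]]]] hl] i]; rewrite /pv /hv /= => h0; try lia.
- have e : Ordinal hl = lvC by apply: val_inj.
  rewrite e; exists (lvB, i); split => //.
  by rewrite adj_sym adj_bc.
- have e : Ordinal hl = lvD by apply: val_inj.
  rewrite e; exists (lvC, i); split => //.
  by rewrite adj_sym adj_cd.
Qed.

Lemma Rup (x : V) : 0 < x.1 -> x.1 < 3 -> exists y, [/\ Sn_adj x y, hv y = hv x + 1 & pv y = pv x].
Proof.
case: x => [[[|[|[|[|l]]]] hl] i]; rewrite /pv /hv /= => h0 h3; try lia.
- have e : Ordinal hl = lvB by apply: val_inj.
  rewrite e; exists (lvC, i); split => //.
  by rewrite adj_bc.
- have e : Ordinal hl = lvC by apply: val_inj.
  rewrite e; exists (lvD, i); split => //.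
  by rewrite adj_cd.
Qed.
Lemma F_desc x w : 0 < F x w -> exists y, Sn_adj x y /\ (F y w).+1 = F x w.
Proof.
rewrite /F.
have hx := pv_lt x; have hw := pv_lt w; have hhx := hv_le x; have hhw := hv_le w.
have hpar' : (2 * n) %% 2 = 0 by lia.
have hpar := cyc_par hpar' hx hw.
case: (ltngtP (hv x) (hv w)) => hc.
- case: (posnP x.1) => h1.
  + have hx0 : hv x = 0 by rewrite /hv h1.
    have hpx : pv x %% 2 = 0 by rewrite /pv h1; lia.
    have hpw := hv_pos (leq_ltn_trans (leq0n _) hc).
    have hc1 : 1 <= cyc (2 * n) (pv x) (pv w) by lia.
    have [p' [hp' hnear hcp]] := cyc_desc hx hw (isT : 0 < 1) hc1.
    have [y [hxy hy0 hpy]] := R1 hx0 hp' hnear.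
    exists y; split => //; rewrite hy0 hpy hx0; move: hcp; rewrite /half /absd; lia.
  + have h3 : x.1 < 3 by move: hc hhw; rewrite /hv; lia.
    have [y [hxy hy hpy]] := Rup h1 h3.
    exists y; split => //; rewrite hy hpy; rewrite /half /absd; lia.
- have [y [hxy hy hpy]] := Rdown (leq_ltn_trans (leq0n _) hc).
  exists y; split => //; rewrite -hy hpy; rewrite /half /absd; lia.
- move=> hpos.
  have hc0 : 1 <= cyc (2 * n) (pv x) (pv w) by move: hpos; rewrite hc /absd /half; lia.
  case: (leqP 2 (cyc (2 * n) (pv x) (pv w))) => h2.
  + have [p' [hp' hnear hcp]] := cyc_desc hx hw (isT : 0 < 2) h2.
    have [y [hxy hy0 hpy]] := R2 hp' hnear.
    exists y; split => //; rewrite hy0 hpy; move: hcp; rewrite /half /absd; lia.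
  + have hx0 : hv x = 0.
      case: (posnP (hv x)) => // hxp.
      have := hv_pos hxp; rewrite hc in hxp; have := hv_pos hxp; lia.
    have [p' [hp' hnear hcp]] := cyc_desc hx hw (isT : 0 < 1) hc0.
    have [y [hxy hy0 hpy]] := R1 hx0 hp' hnear.
    exists y; split => //; rewrite hy0 hpy hx0; move: hcp hc; rewrite /half /absd; lia.
Qed.

Lemma dist_F x w : gdist (@Sn_adj n) x w = F x w.
Proof.
apply: (gdist_char (f := fun v => F v w)).
- rewrite /F /absd subnn; rewrite /cyc /absd subnn /half; lia.
- move=> y hy; exact: (F_zero hy).
- move=> ? ? ?; exact: F_lip.
- move=> y hy; exact: (F_desc hy).
- move=> y; exact: (F_bound y w).
Qed.
End S.

Section G.
Variable T : finType.
Variable adj : rel T.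

Lemma lmd_le (W0 : {set T}) : local_resolving adj W0 -> lmd adj <= #|W0|.
Proof.
move=> h; rewrite /lmd.
have : W0 \in index_enum {set T} by rewrite mem_index_enum.
elim: (index_enum _) => [|x r IH] //=; rewrite inE big_cons.
case/orP => [/eqP <-|hr]; first by rewrite h geq_minl.
case: (local_resolving adj x); last exact: IH.
exact: leq_trans (geq_minr _ _) (IH hr).
Qed.

Lemma lmd_ge k : k <= #|T| -> (forall W : {set T}, local_resolving adj W -> k <= #|W|) -> k <= lmd adj.
Proof.
move=> hT hW; rewrite /lmd.
apply: (big_ind (fun x => k <= x)) => //.
  by move=> x y hx hy; rewrite leq_min hx hy.
Qed.

Lemma sub2 (x0 : T) (W : {set T}) : #|W| <= 2 -> exists w1 w2, W \subset [set w1; w2].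
Proof.
move=> hW; case: (set_0Vmem W) => [->|[w1 hw1]].
  by exists x0, x0; rewrite sub0set.
have h1 : #|W :\ w1| <= 1 by move: hW; rewrite (cardsD1 w1 W) hw1; lia.
case: (set_0Vmem (W :\ w1)) => [e|[w2 hw2]].
  exists w1, w1; apply/subsetP => x hx; rewrite !inE.
  case: (x =P w1) => // hne; have : x \in W :\ w1 by rewrite !inE; apply/andP; split=> //; apply/eqP.
  by rewrite e inE.
exists w1, w2; apply/subsetP => x hx; rewrite !inE.
case: (x =P w1) => //= hne.
have hxD : x \in W :\ w1 by rewrite !inE; apply/andP; split=> //; apply/eqP.
by move/card_le1P: h1 => /(_ w2 hw2 x); rewrite hxD inE.
Qed.

Lemma not_lr (W : {set T}) w1 w2 u v : W \subset [set w1; w2] -> adj u v ->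
  ~~ resolves adj w1 u v -> ~~ resolves adj w2 u v -> ~~ local_resolving adj W.
Proof.
move=> hs huv h1 h2; apply/negP => /forallP /(_ u) /forallP /(_ v); rewrite huv /=.
case/existsP => w /andP [hw hr].
move/subsetP: hs => /(_ w hw); rewrite !inE => /orP [/eqP e|/eqP e]; subst w.
  by rewrite hr in h1.
by rewrite hr in h2.
Qed.
End G.

Definition C1 n q p :=
  (q <= p /\ (((p - q) %% 2 = 1 /\ p - q < n) \/ ((p - q) %% 2 = 0 /\ n <= p - q))) \/
  (p < q /\ (((p + 2 * n - q) %% 2 = 1 /\ p + 2 * n - q < n) \/ ((p + 2 * n - q) %% 2 = 0 /\ n <= p + 2 * n - q))).

Definition C2 n q p := q = p + 1 \/ q + 2 * n = p + 1 \/ q = p + 1 + n \/ q + n = p + 1.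

Lemma U1 n q p p' : 2 <= n -> q < 2 * n -> p < 2 * n -> p' < 2 * n ->
  (p' = p + 1 \/ p' + 2 * n = p + 1) ->
  half (cyc (2 * n) p q) = half (cyc (2 * n) p' q) -> C1 n q p.
Proof.
move=> hn hq hp hp' e.
have := halfR (cyc (2 * n) p q); have := halfR (cyc (2 * n) p' q).
have := cycS hp hq; rewrite /= => -[A|[A|[A|A]]];
have := cycS hp' hq; rewrite /= => -[B|[B|[B|B]]];
case: e => e; rewrite /C1; lia.
Qed.

Lemma U2 n q p p' : 3 <= n -> q < 2 * n -> p < 2 * n -> p' < 2 * n ->
  (p' = p + 2 \/ p' + 2 * n = p + 2) ->
  half (cyc (2 * n) p q) = half (cyc (2 * n) p' q) -> C2 n q p.
Proof.
move=> hn hq hp hp' e.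
have := halfR (cyc (2 * n) p q); have := halfR (cyc (2 * n) p' q).
have := cycS hp hq; rewrite /= => -[A|[A|[A|A]]];
have := cycS hp' hq; rewrite /= => -[B|[B|[B|B]]];
case: e => e; rewrite /C2; lia.
Qed.

Lemma odd_C1 n p : 3 <= n -> n %% 2 = 1 -> p < 2 * n -> C1 n 0 p -> C1 n 1 p -> False.
Proof. rewrite /C1 => *; lia. Qed.
Lemma C2_01 n p : 3 <= n -> p < 2 * n -> C2 n 0 p -> C2 n 1 p -> False.
Proof. rewrite /C2 => *; lia. Qed.
Lemma even_C1 n p : 3 <= n -> n %% 2 = 0 -> p < 2 * n -> C1 n 0 p -> C1 n 1 p -> C1 n 2 p -> False.
Proof. rewrite /C1 => *; lia. Qed.

Lemma U1c n q p p' : 2 <= n -> q < 2 * n -> p < 2 * n -> p' < 2 * n ->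
  (p' = p + 1 \/ p' + 2 * n = p + 1) -> C1 n q p ->
  half (cyc (2 * n) p q) = half (cyc (2 * n) p' q).
Proof.
move=> hn hq hp hp' e.
have := halfR (cyc (2 * n) p q); have := halfR (cyc (2 * n) p' q).
have := cycS hp hq; rewrite /= => -[A|[A|[A|A]]];
have := cycS hp' hq; rewrite /= => -[B|[B|[B|B]]];
case: e => e; rewrite /C1; lia.
Qed.

Lemma U2c n q p p' : 3 <= n -> q < 2 * n -> p < 2 * n -> p' < 2 * n ->
  (p' = p + 2 \/ p' + 2 * n = p + 2) -> C2 n q p ->
  half (cyc (2 * n) p q) = half (cyc (2 * n) p' q).
Proof.
move=> hn hq hp hp' e.
have := halfR (cyc (2 * n) p q); have := halfR (cyc (2 * n) p' q).
have := cycS hp hq; rewrite /= => -[A|[A|[A|A]]];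
have := cycS hp' hq; rewrite /= => -[B|[B|[B|B]]];
case: e => e; rewrite /C2; lia.
Qed.

Lemma C1_odd n q p a : q < 2 * n -> p < 2 * n ->
  (p = q + 2 * a + 1 \/ p + 2 * n = q + 2 * a + 1) -> 2 * a + 1 < n -> C1 n q p.
Proof.
move=> hq hp [e|e] ha; rewrite /C1.
- left; split; first lia. left; split; last lia.
  have -> : p - q = (2 * a + 1) by lia. lia.
- right; split; first lia. left; split; last lia.
  have -> : p + 2 * n - q = (2 * a + 1) by lia. lia.
Qed.

Lemma C1_even n q p a : q < 2 * n -> p < 2 * n ->
  (p = q + 2 * a \/ p + 2 * n = q + 2 * a) -> n <= 2 * a -> 2 * a < 2 * n -> C1 n q p.
Proof.
move=> hq hp [e|e] ha ha'; rewrite /C1.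
- left; split; first lia. right; split; last lia.
  have -> : p - q = (2 * a) by lia. lia.
- right; split; first lia. right; split; last lia.
  have -> : p + 2 * n - q = (2 * a) by lia. lia.
Qed.

Notation lvA := (@Ordinal 4 0 isT).
Notation lvB := (@Ordinal 4 1 isT).
Notation lvC := (@Ordinal 4 2 isT).
Notation lvD := (@Ordinal 4 3 isT).

Section M.
Variable n : nat.
Hypothesis hn : 3 <= n.
Local Notation V := (Sn_vertex n).

Definition i0 : 'I_n := Ordinal (leq_trans (isT : 0 < 3) hn).
Definition a0 : V := (lvA, i0).
Definition b0 : V := (lvB, i0).
Definition a1 : V := (lvA, ordS i0).

Lemma pv_a0 : pv a0 = 0. Proof. by rewrite /pv /=. Qed.
Lemma pv_b0 : pv b0 = 1. Proof. by rewrite /pv /=. Qed.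
Lemma pv_a1 : pv a1 = 2.
Proof. rewrite /pv /= modn_small //; lia. Qed.
Lemma hv_a0 : hv a0 = 0. Proof. by []. Qed.
Lemma hv_b0 : hv b0 = 0. Proof. by []. Qed.
Lemma hv_a1 : hv a1 = 0. Proof. by []. Qed.

Lemma res_F w u v : resolves (@Sn_adj n) w u v = (F u w != F v w).
Proof. by rewrite /resolves !(dist_F hn). Qed.

Definition fwd (p p' : nat) :=
  (p' = p + 1 \/ p' + 2 * n = p + 1) \/ (p' = p + 2 \/ p' + 2 * n = p + 2).

Lemma lr_crit (W : {set V}) w0 : w0 \in W ->
  (forall u v : V, hv u = hv v -> fwd (pv u) (pv v) -> exists2 w, w \in W & F u w != F v w) ->
  local_resolving (@Sn_adj n) W.
Proof.
move=> hw0 H; apply/forallP => u; apply/forallP => v; apply/implyP => huv.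
case: (adj_class hn huv) => [[e hh] | [e hk]].
- apply/existsP; exists w0; rewrite hw0 res_F /F e /=.
  apply/eqP; move: hh; rewrite /absd; lia.
- have [w hw hne] : exists2 w, w \in W & F u w != F v w.
    move: hk; rewrite /near => hk.
    have [f|b] : fwd (pv u) (pv v) \/ fwd (pv v) (pv u) by move: hk; rewrite /fwd; lia.
      exact: H.
    have [w hw hne] := H v u (esym e) b.
    by exists w => //; rewrite eq_sym.
  by apply/existsP; exists w; rewrite hw res_F.
Qed.

Lemma F_hv0 (u w : V) : hv w = 0 -> F u w = hv u + half (cyc (2 * n) (pv u) (pv w)).
Proof. by rewrite /F /absd => ->; rewrite subn0 sub0n addn0. Qed.

Lemma lr_odd : n %% 2 = 1 -> local_resolving (@Sn_adj n) [set a0; b0].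
Proof.
move=> hodd; apply: (lr_crit (w0 := a0)); first by rewrite !inE eqxx.
move=> u v e hf.
case: (boolP (F u a0 == F v a0)) => h1; last by exists a0; rewrite // !inE eqxx.
case: (boolP (F u b0 == F v b0)) => h2; last by exists b0; rewrite // !inE eqxx orbT.
exfalso.
move: h1 h2; rewrite !F_hv0 // pv_a0 pv_b0 e => /eqP h1 /eqP h2.
have h1' : half (cyc (2 * n) (pv u) 0) = half (cyc (2 * n) (pv v) 0) by lia.
have h2' : half (cyc (2 * n) (pv u) 1) = half (cyc (2 * n) (pv v) 1) by lia.
have hu := pv_lt hn u; have hv := pv_lt hn v.
have z : 0 < 2 * n by lia. have o : 1 < 2 * n by lia.
case: hf => hf.
- exact: (odd_C1 hn hodd hu (U1 (ltnW hn) z hu hv hf h1') (U1 (ltnW hn) o hu hv hf h2')).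
- exact: (C2_01 hn hu (U2 hn z hu hv hf h1') (U2 hn o hu hv hf h2')).
Qed.

Lemma lr_even : n %% 2 = 0 -> local_resolving (@Sn_adj n) [set a0; b0; a1].
Proof.
move=> hev; apply: (lr_crit (w0 := a0)); first by rewrite !inE eqxx.
move=> u v e hf.
case: (boolP (F u a0 == F v a0)) => h1; last by exists a0; rewrite // !inE eqxx.
case: (boolP (F u b0 == F v b0)) => h2; last by exists b0; rewrite // !inE eqxx ?orbT.
case: (boolP (F u a1 == F v a1)) => h3; last by exists a1; rewrite // !inE eqxx ?orbT.
exfalso.
move: h1 h2 h3; rewrite !F_hv0 // pv_a0 pv_b0 pv_a1 e => /eqP h1 /eqP h2 /eqP h3.
have h1' : half (cyc (2 * n) (pv u) 0) = half (cyc (2 * n) (pv v) 0) by lia.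
have h2' : half (cyc (2 * n) (pv u) 1) = half (cyc (2 * n) (pv v) 1) by lia.
have h3' : half (cyc (2 * n) (pv u) 2) = half (cyc (2 * n) (pv v) 2) by lia.
have hu := pv_lt hn u; have hv := pv_lt hn v.
have z : 0 < 2 * n by lia. have o : 1 < 2 * n by lia. have t : 2 < 2 * n by lia.
case: hf => hf.
- exact: (even_C1 hn hev hu (U1 (ltnW hn) z hu hv hf h1') (U1 (ltnW hn) o hu hv hf h2')
    (U1 (ltnW hn) t hu hv hf h3')).
- exact: (C2_01 hn hu (U2 hn z hu hv hf h1') (U2 hn o hu hv hf h2')).
Qed.

Lemma card_odd : #|[set a0; b0]| = 2.
Proof. by rewrite cards2. Qed.
Lemma card_even : #|[set a0; b0; a1]| <= 3.
Proof.
have := leq_card_setU [set a0; b0] [set a1]; rewrite cards1 cards2 => /leqifP.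
case: ifP => _ h; move: h; rewrite /=; lia.
Qed.
End M.

Section L.
Variable n : nat.
Hypothesis hn : 3 <= n.
Local Notation V := (Sn_vertex n).

Lemma pvE (l : 'I_4) (i : 'I_n) : pv (l, i) = 2 * i + minn l 1. Proof. by []. Qed.
Lemma hvE (l : 'I_4) (i : 'I_n) : hv (l, i) = l - 1. Proof. by []. Qed.

Lemma F_eq_half (u v w : V) : hv u = hv v ->
  half (cyc (2 * n) (pv u) (pv w)) = half (cyc (2 * n) (pv v) (pv w)) -> F u w = F v w.
Proof. by rewrite /F => -> ->. Qed.

Lemma symadj (x y : V) : Sn_adj x y -> Sn_adj y x.
Proof. by rewrite /Sn_adj orbC. Qed.

Lemma tri_unres (x y z w : V) : Sn_adj x y -> Sn_adj y z -> Sn_adj x z ->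
  F x w = F y w \/ F y w = F z w \/ F x w = F z w.
Proof.
move=> h1 h2 h3.
have := F_lip hn w h1; have := F_lip hn w (symadj h1).
have := F_lip hn w h2; have := F_lip hn w (symadj h2).
have := F_lip hn w h3; have := F_lip hn w (symadj h3).
lia.
Qed.

Lemma tri_adj (t : 'I_n) : [/\ Sn_adj (lvA, t) (lvB, t), Sn_adj (lvB, t) (lvA, ordS t) &
  Sn_adj (lvA, t) (lvA, ordS t)].
Proof.
split.
- by rewrite /Sn_adj /Sn_arc /= !eqxx /= ?orbT.
- by rewrite /Sn_adj /Sn_arc /= !eqxx /= ?orbT.
- by rewrite /Sn_adj /Sn_arc !eqxx.
Qed.

Lemma unres_of_F (W : {set V}) w1 w2 : W \subset [set w1; w2] ->
  (exists u v, [/\ Sn_adj u v, F u w1 = F v w1 & F u w2 = F v w2]) ->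
  ~~ local_resolving (@Sn_adj n) W.
Proof.
move=> hs [u [v [huv e1 e2]]].
by apply: (not_lr hs huv); rewrite res_F // ?e1 ?e2 eqxx.
Qed.

Lemma tri_pair w (t : 'I_n) : exists u v, Sn_adj u v /\ F u w = F v w /\
  ((u = (lvA, t) /\ v = (lvB, t)) \/ (u = (lvB, t) /\ v = (lvA, ordS t)) \/
   (u = (lvA, t) /\ v = (lvA, ordS t))).
Proof.
have [h1 h2 h3] := tri_adj t.
case: (tri_unres w h1 h2 h3) => [e|[e|e]].
- by exists (lvA, t), (lvB, t); split => //; split => //; left.
- by exists (lvB, t), (lvA, ordS t); split => //; split => //; right; left.
- by exists (lvA, t), (lvA, ordS t); split => //; split => //; right; right.
Qed.

Lemma lb2 (W : {set V}) : local_resolving (@Sn_adj n) W -> 2 <= #|W|.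
Proof.
move=> hW; rewrite leqNgt; apply/negP => h1.
have [w1 [w2 hs]] := sub2 (a0 hn) (ltnW h1).
case: (set_0Vmem W) => [e|[w hw]].
  move/forallP: hW => /(_ (a0 hn)) /forallP /(_ (b0 hn)).
  have [hab _ _] := tri_adj (i0 hn).
  by rewrite hab /= e; case/existsP => x; rewrite inE.
have hs' : W \subset [set w; w].
  apply/subsetP => x hx; rewrite !inE orbb.
  have h1' : #|W| <= 1 by lia.
  by move/card_le1P: h1' => /(_ w hw x); rewrite hx inE.
have [u [v [huv [e _]]]] := tri_pair w (i0 hn).
by move: hW; apply/negP; apply: (unres_of_F hs'); exists u, v.
Qed.

Lemma mod_lt2 x : x < 2 * n -> (x < n /\ x %% n = x) \/ (n <= x /\ x %% n + n = x).
Proof.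
move=> hx; case: (ltnP x n) => h.
  by left; rewrite modn_small.
right; split => //.
have -> : x = n + (x - n) by lia.
rewrite modnDl modn_small; lia.
Qed.

Lemma anti (w : V) : n %% 2 = 0 -> 0 < w.1 ->
  exists t : 'I_n, F (lvA, t) w = F (lvB, t) w /\ F (lvB, t) w = F (lvA, ordS t) w.
Proof.
move=> hev; case: w => lw j /= hlw.
have n0 : 0 < n by lia.
have hj := ltn_ord j.
set K := n./2.
have hK : n = 2 * K by rewrite /K; lia.
set t := Ordinal (ltn_pmod (j + K) n0).
have ht : (t : nat) = (j + K) %% n by [].
have hjx : j + K < 2 * n by lia.
have hm : t = j + K :> nat \/ t + n = j + K.
  by case: (mod_lt2 hjx) => -[_ e]; [left|right]; rewrite ht.
have hSt : ordS t = t.+1 :> nat \/ ordS t + n = t.+1.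
  by case: (ordS_val t) => -[h ->]; [left|right]; lia.
have hq := pv_lt hn (lw, j).
have hqE : pv (lw, j) = 2 * j + 1 by rewrite pvE; lia.
have htn := ltn_ord t.
have hSn := ltn_ord (ordS t).
clear ht hjx.
have eA : nat_of_ord lvA = 0 by []. have eB : nat_of_ord lvB = 1 by [].
exists t; split; apply: F_eq_half => //; rewrite hqE !pvE.
- apply: (U1c (ltnW hn)); [lia|lia|lia|lia|].
  apply: (C1_odd (a := K - 1)); [lia|lia| |lia].
  case: hm => e; [left|right]; lia.
- apply: (U1c (ltnW hn)); [lia|lia|lia| |].
    case: hSt => e; [left|right]; lia.
  apply: (C1_even (a := K)); [lia|lia| |lia|lia].
  case: hm => e; [left|right]; lia.
Qed.

Lemma ecase (i k : 'I_n) : n %% 2 = 0 ->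
  exists u v, [/\ Sn_adj u v, F u (lvA, i) = F v (lvA, i) & F u (lvA, k) = F v (lvA, k)].
Proof.
move=> hev.
have hi := ltn_ord i; have hk := ltn_ord k.
have hSi : ordS i = i.+1 :> nat \/ ordS i + n = i.+1.
  by case: (ordS_val i) => -[h ->]; [left|right]; lia.
have hSk : ordS k = k.+1 :> nat \/ ordS k + n = k.+1.
  by case: (ordS_val k) => -[h ->]; [left|right]; lia.
have hPk : ord_pred k + 1 = k :> nat \/ ord_pred k + 1 = k + n.
  by case: (ord_pred_val k) => -[h ->]; [left|right]; lia.
have hSi' := ltn_ord (ordS i); have hSk' := ltn_ord (ordS k); have hPk' := ltn_ord (ord_pred k).
have eA : nat_of_ord lvA = 0 by []. have eB : nat_of_ord lvB = 1 by [].
have eC : nat_of_ord lvC = 2 by [].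
have pA : forall x : 'I_n, pv (lvA, x) = 2 * x by move=> x; rewrite pvE; lia.
have pB : forall x : 'I_n, pv (lvB, x) = 2 * x + 1 by move=> x; rewrite pvE; lia.
have pC : forall x : 'I_n, pv (lvC, x) = 2 * x + 1 by move=> x; rewrite pvE; lia.
have [c|[c|c]] : ((i <= k /\ 2*(k-i) < n) \/ (k < i /\ 2*(k+n-i) < n)) \/
   ((i <= k /\ n < 2*(k-i)) \/ (k < i /\ n < 2*(k+n-i))) \/
   ((i<=k /\ 2*(k-i) = n) \/ (k < i /\ 2*(k+n-i) = n)) by lia.
- exists (lvB, k), (lvA, ordS k); split; first by case: (tri_adj k).
  + apply: F_eq_half => //; rewrite pA pB pA.
    apply: (U1c (ltnW hn)); [lia|lia|lia|case: hSk => e; [left|right]; lia|].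
    case: c => -[c1 c2].
      by apply: (C1_odd (a := k - i)); [lia|lia|left; lia|lia].
    by apply: (C1_odd (a := k + n - i)); [lia|lia|right; lia|lia].
  + apply: F_eq_half => //; rewrite pA pB pA.
    apply: (U1c (ltnW hn)); [lia|lia|lia|case: hSk => e; [left|right]; lia|].
    by apply: (C1_odd (a := 0)); [lia|lia|left; lia|lia].
- exists (lvB, i), (lvA, ordS i); split; first by case: (tri_adj i).
  + apply: F_eq_half => //; rewrite pA pB pA.
    apply: (U1c (ltnW hn)); [lia|lia|lia|case: hSi => e; [left|right]; lia|].
    by apply: (C1_odd (a := 0)); [lia|lia|left; lia|lia].
  + apply: F_eq_half => //; rewrite pA pB pA.
    apply: (U1c (ltnW hn)); [lia|lia|lia|case: hSi => e; [left|right]; lia|].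
    case: c => -[c1 c2].
      by apply: (C1_odd (a := i + n - k)); [lia|lia|right; lia|lia].
    by apply: (C1_odd (a := i - k)); [lia|lia|left; lia|lia].
- exists (lvC, ord_pred k), (lvC, k); split.
  + by rewrite -{2}(ord_predK k) /Sn_adj /Sn_arc !eqxx.
  + apply: F_eq_half => //; rewrite pA !pC.
    apply: U2c => //; [lia|lia|lia| case: hPk => e; [left|right]; lia |].
    rewrite /C2; case: c => -[c1 c2]; case: hPk => e; lia.
  + apply: F_eq_half => //; rewrite pA !pC.
    apply: U2c => //; [lia|lia|lia| case: hPk => e; [left|right]; lia |].
    rewrite /C2; case: hPk => e; lia.
Qed.

Lemma key_even (w1 w2 : V) : n %% 2 = 0 ->
  exists u v, [/\ Sn_adj u v, F u w1 = F v w1 & F u w2 = F v w2].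
Proof.
move=> hev.
have fromanti : forall wa wb : V, 0 < wa.1 ->
    exists u v, [/\ Sn_adj u v, F u wa = F v wa & F u wb = F v wb].
  move=> wa wb ha.
  have [t [e1 e2]] := anti hev ha.
  have [u [v [huv [e hc]]]] := tri_pair wb t.
  exists u, v; split => //.
  case: hc => [[-> ->]|[[-> ->]|[-> ->]]] //.
  by rewrite e1 e2.
case: (posnP w1.1) => h1; last exact: fromanti.
case: (posnP w2.1) => h2; last first.
  have [u [v [huv e1 e2]]] := fromanti w2 w1 h2.
  by exists u, v; split.
case: w1 h1 => l1 i /= h1; case: w2 h2 => l2 k /= h2.
have -> : l1 = lvA by apply: val_inj.
have -> : l2 = lvA by apply: val_inj.
exact: ecase.
Qed.

Lemma lb3 (W : {set V}) : n %% 2 = 0 -> local_resolving (@Sn_adj n) W -> 3 <= #|W|.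
Proof.
move=> hev hW; rewrite leqNgt; apply/negP => h1.
have [w1 [w2 hs]] := sub2 (a0 hn) (h1 : #|W| <= 2).
by move: hW; apply/negP; apply: (unres_of_F hs); apply: key_even.
Qed.
End L.

Theorem theorem3p1 (n : nat) (hn : 3 <= n) :
  lmd (@Sn_adj n) = if odd n then 2 else 3.
Proof.
have hT : #|{: Sn_vertex n}| = 4 * n by rewrite card_prod !card_ord.
case: ifP => ho.
- have hm : n %% 2 = 1 by rewrite modn2 ho.
  apply/eqP; rewrite eqn_leq; apply/andP; split.
  + by apply: leq_trans (lmd_le (lr_odd hn hm)) _; rewrite card_odd.
  + apply: lmd_ge; first by rewrite hT; lia.
    by move=> W; exact: lb2.
- have hm : n %% 2 = 0 by rewrite modn2 ho.
  apply/eqP; rewrite eqn_leq; apply/andP; split.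
  + exact: leq_trans (lmd_le (lr_even hn hm)) (card_even hn).
  + apply: lmd_ge; first by rewrite hT; lia.
    by move=> W; exact: lb3.
Qed.
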